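(* Let $W$ be a set of $n$ workers and $F$ a set of $n$ firms ($n\ge 2$), each worker $w$ having a strict complete preference order $\succ_w$ over $F$ and each firm $f$ a strict complete preference order $\succ_f$ over $W$; call this instance $P$. (1) The normal form of $P$ is uniquely defined: every maximal sequence of single deletion steps (defined in the context) applied starting from the full lists terminates with the same collection of lists, namely the normal form lists $L^*_w$, $L^*_f$, no matter in which order the steps are performed. (2) Suppose $f\in L^*_w$ and $w\in L^*_f$. Then either the pair $(w,f)$ belongs to some stable matching of $P$, or there exist firms $f_{j_1},f_{j_2}\in L^*_w$ with $f_{j_1}\succ_w f\succ_w f_{j_2}$ and workers $w_{i_1},w_{i_2}\in L^*_f$ with $w_{i_1}\succ_f w\succ_f w_{i_2}$.
   Context: A matching is a bijection $\mu$ pairing each worker with exactly one firm and each firm with exactly one worker. A worker $w$ and firm $f$ form a blocking pair for $\mu$ if $f\succ_w \mu(w)$ and $w\succ_f\mu(f)$; $\mu$ is stable if it has no blocking pair. Normal form (simultaneous IDUA): start with lists $L^0_w=F$, $L^0_f=W$. Given lists $L^{k-1}$ (with $f\in L^{k-1}_w$ iff $w\in L^{k-1}_f$), a pair $(w,f)$ with $f\in L^{k-1}_w$ is mutually unattractive at round $k$ if either (i) there is $f'\in L^{k-1}_w$ with $f'\succ_w f$ and $w$ is the $\succ_{f'}$-maximal element of $L^{k-1}_{f'}$, or (ii) there is $w'\in L^{k-1}_f$ with $w'\succ_f w$ and $f$ is the $\succ_{w'}$-maximal element of $L^{k-1}_{w'}$. $L^k$ is obtained from $L^{k-1}$ by removing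 $f$ from $L^{k-1}_w$ and $w$ from $L^{k-1}_f$ for every such pair. The normal form lists $L^*_w,L^*_f$ are the lists at the first $k$ with $L^{k+1}=L^k$, ordered by the original preferences. Single deletion step (on current lists with $f\in L_w$ iff $w\in L_f$): choose a current pair $(w,f)$ (with $f\in L_w$) such that either $w$ is the $\succ_f$-maximal element of $L_f$, in which case remove every pair $(w,f'')$ with $f\succ_w f''$ (i.e. remove $f''$ from $L_w$ and $w$ from $L_{f''}$), or $f$ is the $\succ_w$-maximal element of $L_w$, in which case remove every pair $(w'',f)$ with $w\succ_f w''$. A maximal sequence continues until no step removes any pair. *)

(* Defs.v *)
From mathcomp Require Import all_boot all_order all_fingroup.
Set Implicit Arguments. Unset Strict Implicit. Unset Printing Implicit Defensive.

(* A strict complete preference order on a finite set: r x y means x is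
   strictly preferred to y. *)
Definition strict_pref (T : finType) (r : rel T) : Prop :=
  irreflexive r /\ transitive r /\ (forall x y, x != y -> r x y || r y x).

Section Matching.
Variable n : nat.
(* workers and firms are both indexed by 'I_n *)
Variables (pw : 'I_n -> rel 'I_n)  (* pw w f f' : f >_w f' *)
          (pf : 'I_n -> rel 'I_n). (* pf f w w' : w >_f w' *)

(* Current lists, as the set of acceptable pairs (w, f); then
   f \in L_w  iff  w \in L_f  holds by construction. *)
Definition Lw (E : {set 'I_n * 'I_n}) (w : 'I_n) : {set 'I_n} := [set f | (w, f) \in E].
Definition Lf (E : {set 'I_n * 'I_n}) (f : 'I_n) : {set 'I_n} := [set w | (w, f) \in E].

Definition full : {set 'I_n * 'I_n} := setT.

Definition top_w (E : {set 'I_n * 'I_n}) (w f : 'I_n) : bool :=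
  (f \in Lw E w) && [forall f', ((f' \in Lw E w) && (f' != f)) ==> pw w f f'].
Definition top_f (E : {set 'I_n * 'I_n}) (f w : 'I_n) : bool :=
  (w \in Lf E f) && [forall w', ((w' \in Lf E f) && (w' != w)) ==> pf f w w'].

Definition mut_unattr (E : {set 'I_n * 'I_n}) (w f : 'I_n) : bool :=
  ((w, f) \in E) &&
  ([exists f', [&& f' \in Lw E w, pw w f' f & top_f E f' w]] ||
   [exists w', [&& w' \in Lf E f, pf f w' w & top_w E w' f]]).

Definition idua_round (E : {set 'I_n * 'I_n}) : {set 'I_n * 'I_n} :=
  E :\: [set p | mut_unattr E p.1 p.2].

Definition is_normal_form (E : {set 'I_n * 'I_n}) : Prop :=
  exists k, E = iter k idua_round full /\ idua_round E = E /\
    (forall j, j < k -> iter j.+1 idua_round full != iter j idua_round full).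

Definition del_step (E E' : {set 'I_n * 'I_n}) : Prop :=
  exists w f, (w, f) \in E /\
   ((top_f E f w /\ E' = E :\: [set p | (p.1 == w) && pw w f p.2]) \/
    (top_w E w f /\ E' = E :\: [set p | (p.2 == f) && pf f w p.1])).

Definition eff_step (E E' : {set 'I_n * 'I_n}) : Prop := del_step E E' /\ E' != E.

Fixpoint del_seq (E : {set 'I_n * 'I_n}) (s : seq {set 'I_n * 'I_n}) : Prop :=
  match s with
  | [::] => True
  | E' :: s' => eff_step E E' /\ del_seq E' s'
  end.

Definition maximal_del_seq (s : seq {set 'I_n * 'I_n}) : Prop :=
  del_seq full s /\ ~ (exists E', eff_step (last full s) E').

(* matchings: bijection mu from workers to firms *)
Definition blocking (mu : {perm 'I_n}) (w f : 'I_n) : bool :=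
  pw w f (mu w) && pf f w ((mu^-1)%g f).

Definition stable (mu : {perm 'I_n}) : Prop :=
  forall w f, ~~ blocking mu w f.

End Matching.

(* Main.v *)
Require Import Defs.
From mathcomp Require Import all_boot all_fingroup.
Set Implicit Arguments. Unset Strict Implicit. Unset Printing Implicit Defensive.

Section SP.
Variables (T : finType) (r : rel T).
Hypothesis Hr : strict_pref r.

Lemma sp_irr x : r x x = false.
Proof. by case: Hr => H _; apply: H. Qed.
Lemma sp_trans x y z : r x y -> r y z -> r x z.
Proof. by case: Hr => _ [H _]; apply: H. Qed.
Lemma sp_asym x y : r x y -> r y x = false.
Proof. move=> h; apply/negP=> h2; have := sp_trans h h2; by rewrite sp_irr. Qed.
Lemma sp_total x y : x != y -> r x y || r y x.
Proof. by case: Hr => _ [_ H]; apply: H. Qed.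
Lemma sp_neq x y : r x y -> x != y.
Proof. by move=> h; apply/eqP=> e; rewrite e sp_irr in h. Qed.
Lemma sp_not x y : x != y -> ~~ r x y -> r y x.
Proof. by move=> /sp_total /orP [->|]. Qed.

Lemma sp_not2 x y : x != y -> ~~ r y x -> r x y.
Proof. by move=> ne; apply: sp_not; rewrite eq_sym. Qed.

Lemma sp_top (A : {set T}) a : a \in A -> exists2 x, x \in A & forall y, y \in A -> y != x -> r x y.
Proof.
move=> aA.
pose F x := #|[set y in A | r x y]|.
case: (arg_maxnP F aA) => x xA Hx.
exists x => // y yA nyx.
apply: (sp_not nyx).
apply/negP => ryx.
have := Hx y yA; rewrite /F.
suff: #|[set y0 in A | r x y0]| < #|[set y0 in A | r y y0]| by move=> h1 h2; move: (leq_ltn_trans h2 h1); rewrite ltnn.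
apply: proper_card; apply/properP; split.
  apply/subsetP => z; rewrite !inE => /andP [-> rz] /=; exact: sp_trans ryx rz.
have xA2 : x \in A := xA.
by exists x; rewrite !inE ?xA2 ?ryx ?sp_irr ?andbF.
Qed.
End SP.

Section Main.
Variables (n : nat) (pw pf : 'I_n -> rel 'I_n).
Hypotheses (Hw : forall w, strict_pref (pw w)) (Hf : forall f, strict_pref (pf f)).
Local Notation X := {set 'I_n * 'I_n}.
Implicit Types (E T G : X).

Definition Inv (E : X) := forall w f, (w,f) \notin E ->
  (forall h, (w,h) \in E -> pw w h f) \/ (forall u, (u,f) \in E -> pf f u w).
Definition just (E : X) w g :=
  (exists f, [/\ (w,f) \in E, top_f pf E f w & pw w f g]) \/
  (exists w', [/\ (w',g) \in E, top_w pw E w' g & pf g w' w]).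
Definition terminal (T : X) := forall w g, (w,g) \in T -> ~ just T w g.
Definition contains (mu : {perm 'I_n}) (E : X) := forall w, (w, mu w) \in E.
Definition rjust (E E' : X) := E' \subset E /\
  forall w g, (w,g) \in E -> (w,g) \notin E' -> just E w g.

Lemma topfP E f w u : top_f pf E f w -> (u,f) \in E -> u != w -> pf f w u.
Proof.
case/andP => _ /forallP H uf nuw.
by move: (H u); rewrite !inE uf nuw.
Qed.
Lemma topwP E w f h : top_w pw E w f -> (w,h) \in E -> h != f -> pw w f h.
Proof.
case/andP => _ /forallP H uf nuw.
by move: (H h); rewrite !inE uf nuw.
Qed.
Lemma topf_in E f w : top_f pf E f w -> (w,f) \in E.
Proof. by case/andP; rewrite inE. Qed.
Lemma topw_in E w f : top_w pw E w f -> (w,f) \in E.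
Proof. by case/andP; rewrite inE. Qed.
Lemma topfI E f w : (w,f) \in E -> (forall u, (u,f) \in E -> u != w -> pf f w u) -> top_f pf E f w.
Proof.
move=> wf H; apply/andP; split; first by rewrite inE.
by apply/forallP => u; apply/implyP; rewrite inE => /andP [] /H.
Qed.
Lemma topwI E w f : (w,f) \in E -> (forall h, (w,h) \in E -> h != f -> pw w f h) -> top_w pw E w f.
Proof.
move=> wf H; apply/andP; split; first by rewrite inE.
by apply/forallP => u; apply/implyP; rewrite inE => /andP [] /H.
Qed.
Lemma topf_sub E E' f w : E' \subset E -> top_f pf E f w -> (w,f) \in E' -> top_f pf E' f w.
Proof.
move=> sub t wf; apply: topfI => // u uf; apply: (topfP t).
exact: (subsetP sub).
Qed.
Lemma topw_sub E E' w f : E' \subset E -> top_w pw E w f -> (w,f) \in E' -> top_w pw E' w f.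
Proof.
move=> sub t wf; apply: topwI => // u uf; apply: (topwP t).
exact: (subsetP sub).
Qed.

Lemma sub_rjust mu0 T E E' : contains mu0 T -> Inv T -> terminal T ->
  T \subset E -> rjust E E' -> T \subset E'.
Proof.
move=> cT iT tT sTE [_ rj]; apply/subsetP => [[w g]] wgT.
apply/negPn/negP => nwg.
have wgE : (w,g) \in E := subsetP sTE _ wgT.
case: (rj w g wgE nwg) => [[f [wfE tf pfg]] | [w' [wgE' tw pww]]].
- case wfT: ((w,f) \in T).
    apply: (tT w g wgT); left; exists f; split => //.
    exact: topf_sub sTE tf wfT.
  case: (iT w f (negbT wfT)) => [H|H].
    by move: (H g wgT); rewrite (sp_asym (Hw w) pfg).
  set u := ((mu0^-1)%g f).
  have ufT : (u, f) \in T by have := cT u; rewrite /u permKV.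
  have nuw : u != w by apply/eqP => e; rewrite -e ufT in wfT.
  have := topfP tf (subsetP sTE _ ufT) nuw.
  by rewrite (sp_asym (Hf f) (H u ufT)).
- case wgT': ((w',g) \in T).
    apply: (tT w g wgT); right; exists w'; split => //.
    exact: topw_sub sTE tw wgT'.
  case: (iT w' g (negbT wgT')) => [H|H].
    have m0 := cT w'.
    have ne : mu0 w' != g by apply/eqP => e; rewrite -e m0 in wgT'.
    have := topwP tw (subsetP sTE _ m0) ne.
    by rewrite (sp_asym (Hw w') (H _ m0)).
  by move: (H w wgT); rewrite (sp_asym (Hf g) pww).
Qed.

Lemma contains_rjust mu0 E E' : stable pw pf mu0 -> contains mu0 E -> rjust E E' -> contains mu0 E'.
Proof.
move=> st cE [sub rj] w; apply/negPn/negP => nw.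
case: (rj w _ (cE w) nw) => [[f [wfE tf pfg]] | [w' [wgE' tw pww]]].
- set v := ((mu0^-1)%g f).
  have vf : (v, f) \in E by have := cE v; rewrite /v permKV.
  have nvw : v != w.
    apply/eqP => e; move: pfg; rewrite -e /v permKV (sp_irr (Hw _)) //.
  have := topfP tf vf nvw => pwv.
  by move: (st w f); rewrite /blocking pfg pwv.
- have m0 := cE w'.
  have ne : mu0 w' != mu0 w.
    apply/eqP => /perm_inj e; move: pww; rewrite e (sp_irr (Hf _)) //.
  have := topwP tw m0 ne => h.
  by move: (st w' (mu0 w)); rewrite /blocking h permK pww.
Qed.

Lemma inv_pres E E' : Inv E -> E' \subset E ->
  (forall w g, (w,g) \in E -> (w,g) \notin E' ->
     (forall h, (w,h) \in E' -> pw w h g) \/ (forall u, (u,g) \in E' -> pf g u w)) ->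
  Inv E'.
Proof.
move=> iE sub H w f nwf.
case wfE: ((w,f) \in E); first exact: H.
case: (iE w f (negbT wfE)) => H'; [left|right] => x xE; apply: H'; exact: (subsetP sub).
Qed.

End Main.

Section Steps.
Variables (n : nat) (pw pf : 'I_n -> rel 'I_n).
Hypotheses (Hw : forall w, strict_pref (pw w)) (Hf : forall f, strict_pref (pf f)).
Local Notation X := {set 'I_n * 'I_n}.
Implicit Types (E T G : X).

Definition invcond (E' : X) w g :=
  (forall h, (w,h) \in E' -> pw w h g) \/ (forall u, (u,g) \in E' -> pf g u w).

Lemma del_step_props E E' : del_step pw pf E E' ->
  rjust pw pf E E' /\ forall w g, (w,g) \in E -> (w,g) \notin E' -> invcond E' w g.
Proof.
case=> w [f [wfE [[tf ->]|[tw ->]]]]; (split; [split; first exact: subsetDl|]).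
- move=> a g aE; rewrite !inE aE andbT negbK /= => /andP [/eqP ea pg]; subst a.
  by left; exists f.
- move=> a g aE; rewrite !inE aE andbT negbK /= => /andP [/eqP ea pg]; subst a.
  left => h; rewrite !inE /= eqxx /= => /andP [nh _].
  case: (eqVneq h f) => [->//|hf].
  exact (sp_trans (Hw w) (sp_not2 (Hw w) hf nh) pg).
- move=> a g aE; rewrite !inE aE andbT negbK /= => /andP [/eqP ea pg]; subst g.
  by right; exists w.
- move=> a g aE; rewrite !inE aE andbT negbK /= => /andP [/eqP ea pg]; subst g.
  right => h; rewrite !inE /= eqxx /= => /andP [nh _].
  case: (eqVneq h w) => [->//|hf].
  exact (sp_trans (Hf f) (sp_not2 (Hf f) hf nh) pg).
Qed.

Lemma idua_props E : rjust pw pf E (idua_round pw pf E) /\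
  forall w g, (w,g) \in E -> (w,g) \notin idua_round pw pf E -> invcond (idua_round pw pf E) w g.
Proof.
split; [split; first exact: subsetDl|].
- move=> w g wgE; rewrite !inE wgE andbT negbK /mut_unattr /= wgE /=.
  case/orP => [/existsP [f /and3P [fL pg tf]]|/existsP [w' /and3P [wL pg tw]]].
    by left; exists f; split => //; rewrite inE in fL.
  by right; exists w'; split => //; rewrite inE in wL.
- move=> w g wgE; rewrite !inE wgE andbT negbK /mut_unattr /= wgE /=.
  case/orP => [/existsP [f /and3P [fL pg tf]]|/existsP [w' /and3P [wL pg tw]]].
  + left => h; rewrite !inE /= => /andP [nm whE].
    case: (eqVneq h g) => [e|hg]; first by subst h; rewrite /mut_unattr wgE /= in nm; case/negP: nm; apply/orP; left; apply/existsP; exists f; rewrite fL pg tf.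
    apply/negPn/negP => nhg.
    have gh := sp_not (Hw w) hg nhg.
    case/negP: nm; rewrite /mut_unattr whE /=; apply/orP; left; apply/existsP; exists f.
    by rewrite fL tf (sp_trans (Hw w) pg gh).
  + right => h; rewrite !inE /= => /andP [nm whE].
    case: (eqVneq h w) => [e|hg]; first by subst h; rewrite /mut_unattr wgE /= in nm; case/negP: nm; apply/orP; right; apply/existsP; exists w'; rewrite wL pg tw.
    apply/negPn/negP => nhg.
    have gh := sp_not (Hf g) hg nhg.
    case/negP: nm; rewrite /mut_unattr whE /=; apply/orP; right; apply/existsP; exists w'.
    by rewrite wL tw (sp_trans (Hf g) pg gh).
Qed.

End Steps.

Lemma fix_exists (T : finType) (g : {set T} -> {set T}) :
  (forall E, g E \subset E) -> forall E0, exists k, g (iter k g E0) == iter k g E0.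
Proof.
move=> gs E0.
have H : forall k, (exists j, g (iter j g E0) == iter j g E0) \/ #|iter k g E0| + k <= #|E0|.
  elim=> [|k [IH|IH]]; [by right; rewrite addn0 | by left|].
  case e: (g (iter k g E0) == iter k g E0); first by left; exists k.
  right; rewrite iterS.
  have : #|g (iter k g E0)| < #|iter k g E0|.
    by apply: proper_card; rewrite properEneq gs e.
  move=> h; apply: leq_trans IH; by rewrite addnS -addSn leq_add2r.
case: (H #|E0|.+1) => // h; exfalso; move: h; rewrite addnS ltnNge leq_addl.
done.
Qed.

Section Term.
Variables (n : nat) (pw pf : 'I_n -> rel 'I_n).
Hypotheses (Hw : forall w, strict_pref (pw w)) (Hf : forall f, strict_pref (pf f)).
Local Notation X := {set 'I_n * 'I_n}.
Implicit Types (E T G : X).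

Lemma term_idua E : idua_round pw pf E = E -> terminal pw pf E.
Proof.
move=> fx w g wgE J.
have : (w,g) \in idua_round pw pf E by rewrite fx.
rewrite !inE wgE andbT /mut_unattr wgE /=; case/negP; apply/orP.
case: J => [[f [wf tf pg]]|[w' [wg tw pg]]].
  by left; apply/existsP; exists f; rewrite inE wf pg tf.
by right; apply/existsP; exists w'; rewrite inE wg pg tw.
Qed.

Lemma term_max E : ~ (exists E', eff_step pw pf E E') -> terminal pw pf E.
Proof.
move=> nx w g wgE [[f [wf tf pg]]|[w' [wg tw pg]]]; apply: nx.
  exists (E :\: [set p | (p.1 == w) && pw w f p.2]); split.
    by exists w, f; split => //; left.
  apply/eqP => e; have : (w,g) \in E :\: [set p | (p.1 == w) && pw w f p.2] by rewrite e.
  by rewrite !inE eqxx pg.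
exists (E :\: [set p | (p.2 == g) && pf g w' p.1]); split.
  by exists w', g; split => //; right.
apply/eqP => e; have : (w,g) \in E :\: [set p | (p.2 == g) && pf g w' p.1] by rewrite e.
by rewrite !inE eqxx pg.
Qed.

End Term.

Section GS.
Variables (n : nat) (pw pf : 'I_n -> rel 'I_n).
Hypotheses (Hw : forall w, strict_pref (pw w)) (Hf : forall f, strict_pref (pf f)).
Local Notation X := {set 'I_n * 'I_n}.
Implicit Types (E T G : X).

Definition gs_round (E : X) : X :=
  E :\: [set p | [exists w', top_w pw E w' p.2 && pf p.2 w' p.1]].
Definition PP (E : X) := forall f, (forall w, (w,f) \in E) \/ exists v, top_w pw E v f.
Definition InvF (E : X) := forall w f, (w,f) \notin E -> forall u, (u,f) \in E -> pf f u w.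

Lemma topw_uniq E v f1 f2 : top_w pw E v f1 -> top_w pw E v f2 -> f1 = f2.
Proof.
move=> t1 t2; apply/eqP/negPn/negP => ne.
have h1 : pw v f1 f2.
  by apply: (topwP t1 (topw_in t2)); rewrite eq_sym.
have h2 := topwP t2 (topw_in t1) ne.
by rewrite (sp_asym (Hw v) h1) in h2.
Qed.
Lemma topf_uniq E f v1 v2 : top_f pf E f v1 -> top_f pf E f v2 -> v1 = v2.
Proof.
move=> t1 t2; apply/eqP/negPn/negP => ne.
have h1 : pf f v1 v2.
  by apply: (topfP t1 (topf_in t2)); rewrite eq_sym.
have h2 := topfP t2 (topf_in t1) ne.
by rewrite (sp_asym (Hf f) h1) in h2.
Qed.

Lemma gs_pres E : PP E -> InvF E -> PP (gs_round E) /\ InvF (gs_round E).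
Proof.
move=> pE iE; split.
- move=> f; case: (boolP [exists v, top_w pw E v f]) => [/existsP [v0 t0]|nx].
    have v0S : v0 \in [set v | top_w pw E v f] by rewrite inE.
    have [v vS Hv] := sp_top (Hf f) v0S.
    move: vS; rewrite inE => vS.
    right; exists v; apply: (topw_sub (subsetDl _ _) vS).
    rewrite !inE (topw_in vS) andbT /=; apply/existsP => [[w' /andP [tw' pg]]].
    have ne : w' != v by apply/eqP => e; rewrite e (sp_irr (Hf _)) in pg.
    have w'S : w' \in [set v | top_w pw E v f] by rewrite inE.
    have := Hv w' w'S ne; by rewrite (sp_asym (Hf f) pg).
  have same : forall w, ((w,f) \in gs_round E) = ((w,f) \in E).
    move=> w; rewrite !inE /=; case: ((w,f) \in E); rewrite ?andbF ?andbT //.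
    apply/negP => /existsP [w' /andP [t _]]; case/negP: nx; apply/existsP; by exists w'.
  case: (pE f) => [H|[v tv]]; first by left => w; rewrite same.
  by case/negP: nx; apply/existsP; exists v.
- move=> w f nwf u uf.
  case wfE: ((w,f) \in E).
    move: nwf; rewrite !inE wfE andbT negbK /= => /existsP [w' /andP [tw pg]].
    move: uf; rewrite !inE /= => /andP [nu _].
    case: (eqVneq u w') => [->//|ne].
    have nu' : ~~ pf f w' u by apply/negP => h; case/negP: nu; apply/existsP; exists w'; rewrite tw h.
    exact (sp_trans (Hf f) (sp_not2 (Hf f) ne nu') pg).
  apply: (iE w f (negbT wfE)); move: uf; rewrite inE => /andP [_ ->] //.
Qed.

Lemma stable_exists : exists mu, stable pw pf mu.
Proof.
have [k /eqP fx] := fix_exists (fun E => subsetDl E _) (full n) (g := gs_round).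
set G := iter k gs_round (full n) in fx.
have [pG iG] : PP G /\ InvF G.
  rewrite /G; elim: k {fx G} => [|k [p i]]; last by rewrite iterS; exact: gs_pres.
  split; first by move=> f; left => w; rewrite /full inE.
  by move=> w f; rewrite /full inE.
have fxp : forall w' f w, top_w pw G w' f -> (w,f) \in G -> ~~ pf f w' w.
  move=> w' f w t wf; apply/negP => pg.
  have : (w,f) \in gs_round G by rewrite fx.
  by rewrite !inE wf andbT /=; case/negP; apply/existsP; exists w'; rewrite t pg.
have ne : forall w, exists f, (w,f) \in G.
  move=> w; case: (boolP [exists f, (w,f) \in G]) => [/existsP //|/existsPn nx]; exfalso.
  have Hv : forall f, exists v, top_w pw G v f.
    by move=> f; case: (pG f) => // H; move: (nx f); rewrite H.
  pose h f := odflt w [pick v | top_w pw G v f].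
  have th : forall f, top_w pw G (h f) f.
    move=> f; rewrite /h; case: pickP => [v //|none].
    by case: (Hv f) => v t; move: (none v); rewrite t.
  have hinj : injective h.
    move=> f1 f2 e; apply: (topw_uniq (th f1)); rewrite e; exact: th.
  have := inj_card_onto hinj (leqnn _) w.
  case/codomP => f e; move: (topw_in (th f)); rewrite -e.
  by rewrite (negbTE (nx f)).
pose mu w := odflt w [pick f | top_w pw G w f].
have tmu : forall w, top_w pw G w (mu w).
  move=> w; rewrite /mu; case: pickP => [f //|none].
  case: (ne w) => f0 f0G.
  have f0S : f0 \in [set f | (w,f) \in G] by rewrite inE.
  have [f fS Hf'] := sp_top (Hw w) f0S.
  move: (none f); rewrite inE in fS.
  suff -> : top_w pw G w f by [].
  by apply: topwI => // h hG; apply: Hf'; rewrite inE.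
have minj : injective mu.
  move=> w1 w2 e; apply/eqP/negPn/negP => nw.
  have t1 := tmu w1; have t2 := tmu w2; rewrite -e in t2.
  case/orP: (sp_total (Hf (mu w1)) nw) => h.
    by move: (fxp _ _ _ t1 (topw_in t2)); rewrite h.
  by move: (fxp _ _ _ t2 (topw_in t1)); rewrite h.
exists (perm minj) => v g; apply/negP => /andP [].
set u := ((perm minj)^-1)%g g.
have ug : mu u = g by rewrite -(permE minj) /u permKV.
rewrite permE => pg pu.
have uG : (u,g) \in G by rewrite -ug; exact: topw_in.
case vgG: ((v,g) \in G).
  case: (eqVneq g (mu v)) => [e|ne']; first by rewrite -e (sp_irr (Hw _)) in pg.
  by have := topwP (tmu v) vgG ne'; rewrite (sp_asym (Hw v) pg).
by have := iG v g (negbT vgG) u uG; rewrite (sp_asym (Hf g) pu).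
Qed.

End GS.

Section Final.
Variables (n : nat) (pw pf : 'I_n -> rel 'I_n).
Hypotheses (Hw : forall w, strict_pref (pw w)) (Hf : forall f, strict_pref (pf f)).
Local Notation X := {set 'I_n * 'I_n}.
Implicit Types (E T G : X).

Lemma part2 T mu0 : contains mu0 T -> Inv pw pf T -> terminal pw pf T ->
  forall w f, f \in Lw T w -> w \in Lf T f ->
       (exists mu : {perm 'I_n}, stable pw pf mu /\ mu w = f) \/
       (exists f1 f2 w1 w2,
          [/\ f1 \in Lw T w, f2 \in Lw T w, pw w f1 f & pw w f f2] /\
          [/\ w1 \in Lf T f, w2 \in Lf T f, pf f w1 w & pf f w w2]).
Proof.
move=> cT iT tT.
pose mu w := odflt w [pick f | top_w pw T w f].
have tmu : forall w, top_w pw T w (mu w).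
  move=> w; rewrite /mu; case: pickP => [f //|none].
  have f0S : mu0 w \in [set f | (w,f) \in T] by rewrite inE.
  have [f fS Hf'] := sp_top (Hw w) f0S.
  move: (none f); move: fS; rewrite inE => fS.
  suff -> : top_w pw T w f by [].
  by apply: topwI => // h hG; apply: Hf'; rewrite inE.
have botw : forall u f v, top_w pw T u f -> (v,f) \in T -> v != u -> pf f v u.
  move=> u f v t vf ne; apply/negPn/negP => nv.
  have ne' : u != v by rewrite eq_sym.
  have h := sp_not2 (Hf f) ne' nv.
  apply: (tT v f vf); right; exists u; split; [exact: (topw_in t) | exact: t | exact: h].
have minj : injective mu.
  move=> w1 w2 e; apply/eqP/negPn/negP => nw.
  have t1 := tmu w1; have t2 := tmu w2; rewrite -e in t2.
  have nw' : w2 != w1 by rewrite eq_sym.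
  have h1 := botw _ _ _ t1 (topw_in t2) nw'.
  have h2 := botw _ _ _ t2 (topw_in t1) nw.
  by rewrite (sp_asym (Hf _) h1) in h2.
pose rho f := odflt f [pick w | top_f pf T f w].
have trho : forall f, top_f pf T f (rho f).
  move=> f; rewrite /rho; case: pickP => [w //|none].
  have w0T : ((mu0^-1)%g f, f) \in T by have := cT ((mu0^-1)%g f); rewrite permKV.
  have w0S : (mu0^-1)%g f \in [set w | (w,f) \in T] by rewrite inE.
  have [w wS Hw'] := sp_top (Hf f) w0S.
  move: (none w); move: wS; rewrite inE => wS.
  suff -> : top_f pf T f w by [].
  by apply: topfI => // h hG; apply: Hw'; rewrite inE.
have botf : forall g w h, top_f pf T g w -> (w,h) \in T -> h != g -> pw w h g.
  move=> g w h t wh ne; apply/negPn/negP => nv.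
  have ne' : g != h by rewrite eq_sym.
  have hh := sp_not2 (Hw w) ne' nv.
  apply: (tT w h wh); left; exists g; split; [exact: (topf_in t) | exact: t | exact: hh].
have rinj : injective rho.
  move=> f1 f2 e; apply/eqP/negPn/negP => nf.
  have t1 := trho f1; have t2 := trho f2; rewrite -e in t2.
  have nf' : f2 != f1 by rewrite eq_sym.
  have h1 := botf _ _ _ t1 (topf_in t2) nf'.
  have h2 := botf _ _ _ t2 (topf_in t1) nf.
  by rewrite (sp_asym (Hw _) h1) in h2.
pose M := perm minj.
have stM : stable pw pf M.
  move=> v g; apply/negP => /andP [].
  set u := (M^-1)%g g.
  have ug : mu u = g by rewrite -(permE minj) /u permKV.
  rewrite permE => pg pu.
  have uG : (u,g) \in T by rewrite -ug; exact: topw_in.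
  case vgG: ((v,g) \in T).
    case: (eqVneq g (mu v)) => [e|ne']; first by rewrite -e (sp_irr (Hw _)) in pg.
    by have := topwP (tmu v) vgG ne'; rewrite (sp_asym (Hw v) pg).
  case: (iT v g (negbT vgG)) => H.
    by have := H _ (topw_in (tmu v)); rewrite (sp_asym (Hw v) pg).
  by have := H u uG; rewrite (sp_asym (Hf g) pu).
pose N := ((perm rinj)^-1)%g.
have rN : forall w, rho (N w) = w by move=> w; rewrite -(permE rinj) /N permKV.
have stN : stable pw pf N.
  move=> v g; apply/negP => /andP [].
  move=> pg; rewrite /N invgK permE => pu.
  have vh : (v, N v) \in T by have := topf_in (trho (N v)); rewrite rN.
  case vgG: ((v,g) \in T).
    have ne : v != rho g by apply/eqP => e; rewrite -e (sp_irr (Hf _)) in pu.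
    by have := topfP (trho g) vgG ne; rewrite (sp_asym (Hf g) pu).
  case: (iT v g (negbT vgG)) => H.
    by have := H _ vh; rewrite (sp_asym (Hw v) pg).
  by have := H _ (topf_in (trho g)); rewrite (sp_asym (Hf g) pu).
move=> w f; rewrite !inE => wf _.
case: (boolP [exists f1, ((w,f1) \in T) && pw w f1 f]) => [/existsP [f1 /andP [f1T p1]]|nx1].
  2: { left; exists M; split => //; rewrite permE; apply: (topw_uniq Hw (tmu w)).
       apply: topwI => // h hT ne; apply: (sp_not2 (Hw w)); first by rewrite eq_sym.
       by apply/negP => p; case/negP: (existsPn nx1 h); rewrite hT p. }
case: (boolP [exists f2, ((w,f2) \in T) && pw w f f2]) => [/existsP [f2 /andP [f2T p2]]|nx2].
  2: { left; exists N; split => //.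
       case: (eqVneq (N w) f) => // ne.
       have t := trho (N w); rewrite rN in t.
       have ne' : f != N w by rewrite eq_sym.
       have p := botf _ _ _ t wf ne'.
       by case/negP: (existsPn nx2 (N w)); rewrite (topf_in t) p. }
case: (boolP [exists w1, ((w1,f) \in T) && pf f w1 w]) => [/existsP [w1 /andP [w1T q1]]|nx3].
  2: { left; exists N; split => //.
       have t : top_f pf T f w.
         apply: topfI => // h hT ne; apply: (sp_not2 (Hf f)); first by rewrite eq_sym.
         by apply/negP => p; case/negP: (existsPn nx3 h); rewrite hT p.
       have e : rho f = w := topf_uniq Hf (trho f) t.
       by rewrite -e /N -(permE rinj) permK. }
case: (boolP [exists w2, ((w2,f) \in T) && pf f w w2]) => [/existsP [w2 /andP [w2T q2]]|nx4].
  2: { left; exists M; split => //.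
       set u := (M^-1)%g f.
       have ug : mu u = f by rewrite -(permE minj) /u permKV.
       have t := tmu u; rewrite ug in t.
       case: (eqVneq u w) => [e|ne]; first by rewrite -e permE.
       have ne' : w != u by rewrite eq_sym.
       have p := botw _ _ _ t wf ne'.
       by case/negP: (existsPn nx4 u); rewrite (topw_in t) p. }
right; exists f1, f2, w1, w2; split; split; rewrite ?inE //.
Qed.

End Final.

Section Seqs.
Variables (n : nat) (pw pf : 'I_n -> rel 'I_n).
Hypotheses (Hw : forall w, strict_pref (pw w)) (Hf : forall f, strict_pref (pf f)).
Local Notation X := {set 'I_n * 'I_n}.
Implicit Types (E T G : X).

Lemma seq_good mu0 s E : stable pw pf mu0 -> del_seq pw pf E s ->
  contains mu0 E -> Inv pw pf E -> contains mu0 (last E s) /\ Inv pw pf (last E s).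
Proof.
move=> st; elim: s E => [|E' s IH] E //= [[ds _] dsq] cE iE.
have [rj ic] := del_step_props Hw Hf ds.
apply: IH => //; first exact: contains_rjust st cE rj.
by apply: inv_pres iE _ ic; case: rj.
Qed.

Lemma seq_sub mu0 T s E : contains mu0 T -> Inv pw pf T -> terminal pw pf T ->
  del_seq pw pf E s -> T \subset E -> T \subset last E s.
Proof.
move=> cT iT tT; elim: s E => [|E' s IH] E //= [[ds _] dsq] sTE.
have [rj _] := del_step_props Hw Hf ds.
apply: IH => //; exact: sub_rjust cT iT tT sTE rj.
Qed.

Lemma idua_good mu0 j : stable pw pf mu0 ->
  contains mu0 (iter j (idua_round pw pf) (full n)) /\ Inv pw pf (iter j (idua_round pw pf) (full n)).
Proof.
move=> st; elim: j => [|j [cE iE]].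
  by split; [move=> w; rewrite /full inE | move=> w f; rewrite /full inE].
have [rj ic] := idua_props Hw Hf (iter j (idua_round pw pf) (full n)).
rewrite iterS; split; first exact: contains_rjust st cE rj.
by apply: inv_pres iE _ ic; case: rj.
Qed.

Lemma idua_sub mu0 T j : contains mu0 T -> Inv pw pf T -> terminal pw pf T ->
  T \subset iter j (idua_round pw pf) (full n).
Proof.
move=> cT iT tT; elim: j => [|j IH]; first by apply/subsetP => x; rewrite /full inE.
have [rj _] := idua_props Hw Hf (iter j (idua_round pw pf) (full n)).
rewrite iterS; exact: sub_rjust cT iT tT IH rj.
Qed.

End Seqs.

Theorem lemma2 (n : nat) (pw pf : 'I_n -> rel 'I_n) :
  2 <= n ->
  (forall w, strict_pref (pw w)) ->
  (forall f, strict_pref (pf f)) ->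
  exists Ls : {set 'I_n * 'I_n},
    is_normal_form pw pf Ls /\
    (* (1) every sequence of deletion steps terminates ... *)
    ~ (exists s : nat -> {set 'I_n * 'I_n},
          s 0 = full n /\ forall i, eff_step pw pf (s i) (s i.+1)) /\
    (* ... and every maximal one ends at the normal form *)
    (forall s, maximal_del_seq pw pf s -> last (full n) s = Ls) /\
    (* (2) *)
    (forall w f, f \in Lw Ls w -> w \in Lf Ls f ->
       (exists mu : {perm 'I_n}, stable pw pf mu /\ mu w = f) \/
       (exists f1 f2 w1 w2,
          [/\ f1 \in Lw Ls w, f2 \in Lw Ls w, pw w f1 f & pw w f f2] /\
          [/\ w1 \in Lf Ls f, w2 \in Lf Ls f, pf f w1 w & pf f w w2])).
Proof.
move=> _ Hw Hf.
have [mu0 st0] := stable_exists Hw Hf.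
have ex := fix_exists (g := idua_round pw pf) (fun E => subsetDl E _) (full n).
case: (ex_minnP ex) => k Pk mink.
set Ls := iter k (idua_round pw pf) (full n) in Pk.
have [cL iL] := idua_good Hw Hf k st0.
have tL : terminal pw pf Ls by apply: term_idua; exact/eqP.
exists Ls; split; [|split; [|split]].
- exists k; split => //; split; first exact/eqP.
  move=> j jk; apply/negP => /eqP e.
  have := mink j; rewrite -iterS e eqxx => /(_ isT).
  by rewrite leqNgt jk.
- case=> s [s0 Hs].
  have H : forall i, #|s i| + i <= #|full n|.
    elim=> [|i IH]; first by rewrite s0 addn0.
    case: (Hs i) => ds ne.
    have [[sub _] _] := del_step_props Hw Hf ds.
    have : #|s i.+1| < #|s i| by apply: proper_card; rewrite properEneq sub ne.
    move=> lt; apply: leq_trans IH; by rewrite addnS -addSn leq_add2r.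
  by have := H #|full n|.+1; rewrite addnS ltnNge leq_addl.
- move=> s [ds nx].
  have c0 : contains mu0 (full n) by move=> w; rewrite /full inE.
  have i0 : Inv pw pf (full n) by move=> w f; rewrite /full inE.
  have [cT iT] := seq_good Hw Hf st0 ds c0 i0.
  have tT := term_max nx.
  apply/eqP; rewrite eqEsubset; apply/andP; split.
    exact: idua_sub cT iT tT.
  have sf : Ls \subset full n by apply/subsetP => x; rewrite /full inE.
  exact: (seq_sub Hw Hf cL iL tL ds sf).
- move=> w f; exact: (part2 Hw Hf cL iL tL).
Qed.
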